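(* There is no LCL problem on cycles with mending radius between $\omega(1)$ and $o(n)$: if an LCL problem $\Pi$ on the family of all cycles is $T$-mendable for some function $T$ with $T(n)=o(n)$, then $\Pi$ is $T'$-mendable for some constant function $T'$.
   Context: A locally verifiable problem $\Pi$ on a graph family $\mathcal{G}$ is given by a set $\Sigma$ of input labels, a set $\Gamma$ of output labels and a verifier $\psi$ with verification radius $r$: $\psi(G,\lambda,v)\in\{\text{happy},\text{unhappy}\}$ depends only on the radius-$r$ neighborhood of $v$ (structure, inputs and outputs, up to isomorphism); $\lambda:V\to\Gamma$ is a solution if $\psi$ is happy everywhere. $\Pi$ is an LCL problem if $\Sigma,\Gamma$ are finite and all graphs in $\mathcal{G}$ have maximum degree bounded by a constant. Partial labelings are maps $\lambda:V\to\Gamma\cup\{\bot\}$; the relaxed verifier $\psi^*$ is happy at $v$ if some node within distance $r$ of $v$ has label $\bot$, and otherwise $\psi^*(G,\lambda,v)=\psi(G,\lambda',v)$ for any $\lambda':V\to\Gamma$ agreeing with $\lambda$ on the radius-$r$ neighborhood of $v$; $\psi^*$ accepts $\lambda$ if happy everywhere. Given $\lambda$ accepted by $\psi^*$ and node $v$, a $t$-mend of $\lambda$ at $v$ is a partial labeling $\mu$ accepted by $\psi^*$ with $\mu(v)\neq\bot$, $\mu(u)=\bot\Rightarrow\lambda(u)=\bot$, and $\mu(u)\neq\lambda(u)\Rightarrow\mathrm{dist}(u,v)\le t$. A verifier is $T$-mendable if for every $G\in\mathcal{G}$ with $n$ nodes, every $\lambda$ accepted by $\psi^*$ and every node $v$,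 a $T(n)$-mend at $v$ exists; $\Pi$ is $T$-mendable if some radius-$r$ verifier for $\Pi$ (accepting exactly the solutions of $\Pi$) is $T$-mendable. *)

(* Defs.v *)
From mathcomp Require Import all_boot.
Set Implicit Arguments.
Unset Strict Implicit.
Unset Printing Implicit Defensive.

Unset Implicit Arguments.
Definition cadj (n : nat) : rel 'I_n :=
  fun i j => (val j == (val i).+1 %% n) || (val i == (val j).+1 %% n).

Set Implicit Arguments.
Fixpoint within (V : finType) (e : rel V) (k : nat) (u w : V) : bool :=
  match k with
  | 0 => u == w
  | k'.+1 => (u == w) || [exists x, e u x && within e k' x w]
  end.

(* Isomorphism of the radius-r neighborhoods (induced subgraphs on the radius-r
   balls), rooted at v resp. v', preserving input labels a and output labels b. *)
Definition ball_iso (V V' : finType) (e : rel V) (e' : rel V') (A B : Type)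
  (r : nat) (a : V -> A) (b : V -> B) (a' : V' -> A) (b' : V' -> B)
  (v : V) (v' : V') : Prop :=
  exists f : V -> V',
    f v = v' /\
    (forall u, within e r v u -> within e' r v' (f u)) /\
    (forall u w, within e r v u -> within e r v w -> f u = f w -> u = w) /\
    (forall u', within e' r v' u' -> exists2 u, within e r v u & f u = u') /\
    (forall u w, within e r v u -> within e r v w -> e' (f u) (f w) = e u w) /\
    (forall u, within e r v u -> a' (f u) = a u /\ b' (f u) = b u).

(* A verifier on the family of cycles: psi n sigma lambda v (true = happy),
   for the n-cycle with inputs sigma and outputs lambda. *)
Definition verifier (Sigma Gamma : Type) :=
  forall n : nat, ('I_n -> Sigma) -> ('I_n -> Gamma) -> 'I_n -> bool.

Definition has_radius (Sigma Gamma : Type) (psi : verifier Sigma Gamma) (r : nat) :=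
  forall (n n' : nat) (s : 'I_n -> Sigma) (l : 'I_n -> Gamma)
         (s' : 'I_n' -> Sigma) (l' : 'I_n' -> Gamma) (v : 'I_n) (v' : 'I_n'),
    2 < n -> 2 < n' ->
    ball_iso (cadj n) (cadj n') r s l s' l' v v' ->
    psi n s l v = psi n' s' l' v'.

Definition solution (Sigma Gamma : Type) (psi : verifier Sigma Gamma) (n : nat)
  (s : 'I_n -> Sigma) (l : 'I_n -> Gamma) : Prop :=
  forall v, psi n s l v.

(* Relaxed verifier psi^* on partial labelings (None = bottom). *)
Definition relaxed (Sigma Gamma : Type) (psi : verifier Sigma Gamma) (r n : nat)
  (s : 'I_n -> Sigma) (l : 'I_n -> option Gamma) (v : 'I_n) : Prop :=
  (exists u, within (cadj n) r v u /\ l u = None) \/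
  (forall l' : 'I_n -> Gamma,
      (forall u, within (cadj n) r v u -> l u = Some (l' u)) -> psi n s l' v).

Definition accepts (Sigma Gamma : Type) (psi : verifier Sigma Gamma) (r n : nat)
  (s : 'I_n -> Sigma) (l : 'I_n -> option Gamma) : Prop :=
  forall v, relaxed psi r s l v.

Definition is_mend (Sigma Gamma : Type) (psi : verifier Sigma Gamma) (r n : nat)
  (s : 'I_n -> Sigma) (l : 'I_n -> option Gamma) (v : 'I_n) (t : nat)
  (mu : 'I_n -> option Gamma) : Prop :=
  accepts psi r s mu /\
  mu v <> None /\
  (forall u, mu u = None -> l u = None) /\
  (forall u, mu u <> l u -> within (cadj n) t v u).

Definition mendable_verifier (Sigma Gamma : Type) (psi : verifier Sigma Gamma)
  (r : nat) (T : nat -> nat) : Prop :=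
  forall n, 2 < n -> forall (s : 'I_n -> Sigma) (l : 'I_n -> option Gamma),
    accepts psi r s l -> forall v : 'I_n, exists mu, is_mend psi r s l v (T n) mu.

Definition verifier_for (Sigma Gamma : Type) (psi psi0 : verifier Sigma Gamma) : Prop :=
  forall n, 2 < n -> forall (s : 'I_n -> Sigma) (l : 'I_n -> Gamma),
    solution psi s l <-> solution psi0 s l.

Definition mendable_problem (Sigma Gamma : Type) (psi0 : verifier Sigma Gamma)
  (T : nat -> nat) : Prop :=
  exists (psi : verifier Sigma Gamma) (r : nat),
    has_radius psi r /\ verifier_for psi psi0 /\ mendable_verifier psi r T.

Definition little_o (T : nat -> nat) : Prop :=
  forall k, 0 < k -> exists N, forall n, N <= n -> k * T n <= n.

(* Main.v *)
Require Import Defs.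
From mathcomp Require Import all_boot zify.
Set Implicit Arguments. Unset Strict Implicit.

Lemma n_pos n (b : 'I_n) : 0 < n.
Proof. by apply: leq_ltn_trans (ltn_ord b). Qed.

Definition nd n (b : 'I_n) (j : nat) : 'I_n := Ordinal (ltn_pmod (b + j) (n_pos b)).

Lemma congD n a b c : a = b %[mod n] -> a + c = b + c %[mod n].
Proof. by move=> H; rewrite -modnDml H modnDml. Qed.

Lemma congK n a b c : a + c = b + c %[mod n] -> a = b %[mod n].
Proof. by move/eqP; rewrite eqn_modDr => /eqP. Qed.

Lemma congS n a b : a < n -> b < n -> a = b %[mod n] -> a = b.
Proof. by move=> ha hb; rewrite !modn_small. Qed.

Lemma congR n a b d : a < n -> b < n -> d <= n -> a = b + d %[mod n] ->
  a = b + d \/ a + n = b + d.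
Proof.
move=> ha hb hd H.
case: (ltnP (b + d) n) => h.
  by left; apply: congS H.
right. have e : b + d = (b + d - n) + n by lia.
move: H; rewrite e modnDr => H.
have : a = b + d - n by apply: congS H; lia.
lia.
Qed.

Lemma nd_eq n (b u : 'I_n) j : nd b j = u <-> b + j = u %[mod n].
Proof.
split.
  move=> <-; rewrite /nd /=. by rewrite modn_mod.
move=> H; apply: val_inj => /=; by rewrite H modn_small.
Qed.

Lemma val_nd n (b : 'I_n) j : val (nd b j) = (b + j) %% n.
Proof. by []. Qed.

Lemma nd_nd n (b : 'I_n) i j : nd (nd b i) j = nd b (i + j).
Proof. apply nd_eq => /=. by rewrite modnDml modn_mod addnA. Qed.

Lemma nd_inj n (b : 'I_n) i j : i < n -> j < n -> nd b i = nd b j -> i = j.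
Proof.
move=> hi hj /(congr1 val) /=; move/eqP; rewrite eqn_modDl => /eqP.
by apply: congS.
Qed.

Definition off n (b u : 'I_n) : nat := (u + n - b) %% n.

Lemma off_lt n (b u : 'I_n) : off b u < n.
Proof. exact: ltn_pmod (n_pos b). Qed.

Lemma nd_off n (b u : 'I_n) : nd b (off b u) = u.
Proof.
apply nd_eq; rewrite /off modnDmr.
have -> : b + (u + n - b) = u + n by have := ltn_ord b; lia.
by rewrite modnDr.
Qed.

Lemma off_nd n (b : 'I_n) j : j < n -> off b (nd b j) = j.
Proof. move=> hj; apply: (@nd_inj _ b) => //; [exact: off_lt | exact: nd_off]. Qed.

Lemma cadjE n (u x : 'I_n) :
  cadj n u x = (u + 1 == x %[mod n]) || (x + 1 == u %[mod n]).
Proof.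
rewrite /cadj !addn1 [x %% n]modn_small // [u %% n]modn_small //.
by congr (_ || _); rewrite eq_sym.
Qed.

Lemma congT n a b c : a = b %[mod n] -> b = c %[mod n] -> a = c %[mod n].
Proof. by move=> ->. Qed.

Lemma within_iff n (u w : 'I_n) k : within (cadj n) k u w <->
  exists2 d, d <= k & (u + d = w %[mod n]) \/ (w + d = u %[mod n]).
Proof.
elim: k u => [|k IH] u /=.
  split; first by move/eqP => ->; exists 0 => //; left; rewrite addn0.
  case=> d; rewrite leqn0 => /eqP -> ; rewrite !addn0 => -[] H;
    apply/eqP/val_inj; [apply: congS H|apply: esym; apply: congS H] => //.
split.
  case/orP; first by move/eqP => ->; exists 0 => //; left; rewrite addn0.
  case/existsP => x /andP [hux /IH [d hd hx]].
  rewrite cadjE in hux.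
  have eqx : forall a b : 'I_n, a + 0 = b %[mod n] -> a = b.
    by move=> a b; rewrite addn0 => h; apply/val_inj; apply: congS h.
  case/orP: hux => /eqP hux.
    case: hx => hx.
      exists d.+1 => //; left.
      have -> : u + d.+1 = (u + 1) + d by lia.
      exact: congT (congD _ hux) hx.
    case: d hd hx => [|d] hd hx.
      by exists 1 => //; left; rewrite (eqx _ _ hx).
    exists d => //; [lia|]. right.
    apply: (@congK _ _ _ 1).
    have -> : w + d + 1 = w + d.+1 by lia.
    exact: congT hx (esym hux).
  case: hx => hx.
    case: d hd hx => [|d] hd hx.
      by exists 1 => //; right; rewrite -(eqx _ _ hx).
    exists d => //; [lia|]. left.
    apply: congT (congD _ (esym hux)) _.
    have -> : x + 1 + d = x + d.+1 by lia.
    exact: hx.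
  exists d.+1 => //; right.
  have -> : w + d.+1 = (w + d) + 1 by lia.
  exact: congT (congD _ hx) hux.
case=> d hd H.
case: d hd H => [|d] hd H.
  apply/orP; left; apply/eqP/val_inj.
  by case: H; rewrite addn0 => H; [apply: congS H|apply: esym; apply: congS H].
apply/orP; right; case: H => H.
  apply/existsP; exists (nd u 1); apply/andP; split.
    by rewrite cadjE; apply/orP; left; apply/eqP; rewrite /= modn_mod.
  apply/IH; exists d => //; left.
  rewrite /= modnDml -addnA add1n; exact: H.
apply/existsP; exists (nd w d); apply/andP; split.
  rewrite cadjE; apply/orP; right; apply/eqP; rewrite /= modnDml -addnA addn1.
  by rewrite H.
apply/IH; exists d => //; right.
by rewrite /= modn_mod.
Qed.

Lemma ball_nd n (b u : 'I_n) r :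
  within (cadj n) r (nd b r) u <-> exists2 j, j <= r.*2 & u = nd b j.
Proof.
rewrite within_iff; split.
  case=> d hd [] H.
    exists (r + d); first lia.
    apply/esym/nd_eq; rewrite addnA; apply: congT _ H. by rewrite /= modnDml.
  exists (r - d); first lia.
  apply/esym/nd_eq; apply: (@congK _ _ _ d).
  have -> : b + (r - d) + d = b + r by lia.
  apply: esym; apply: congT H _. by rewrite /= modn_mod.
case=> j hj ->.
case: (leqP r j) => hrj.
  exists (j - r); first lia.
  left. rewrite /= modnDml. have -> : b + r + (j - r) = b + j by lia.
  by rewrite modn_mod.
exists (r - j); first lia.
right. rewrite /= modnDml. have -> : b + j + (r - j) = b + r by lia.
by rewrite modn_mod.
Qed.

Lemma adj_nd n (b : 'I_n) j k : j.+1 < n -> k.+1 < n ->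
  cadj n (nd b j) (nd b k) = (k == j.+1) || (j == k.+1).
Proof.
move=> hj hk; rewrite cadjE /= !modnDml !modn_mod -!addnA !eqn_modDl.
by rewrite !addn1 !modn_small // ?(eq_sym k) ?(eq_sym j); lia.
Qed.

Lemma iso_nd (A B : Type) n n' (b : 'I_n) (b' : 'I_n') r
  (s : 'I_n -> A) (l : 'I_n -> B) (s' : 'I_n' -> A) (l' : 'I_n' -> B) :
  r.*2.+1 < n -> r.*2.+1 < n' ->
  (forall j, j <= r.*2 -> s' (nd b' j) = s (nd b j) /\ l' (nd b' j) = l (nd b j)) ->
  ball_iso (cadj n) (cadj n') r s l s' l' (nd b r) (nd b' r).
Proof.
move=> hn hn' H.
exists (fun u => nd b' (off b u)).
have offj : forall j, j <= r.*2 -> off b (nd b j) = j.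
  by move=> j hj; apply: off_nd; lia.
split; first by rewrite offj //; lia.
split.
  move=> u /ball_nd [j hj ->]; rewrite offj //; apply/ball_nd; by exists j.
split.
  move=> u w /ball_nd [j hj ->] /ball_nd [k hk ->]; rewrite !offj // => /nd_inj.
  by move=> e; rewrite e //; lia.
split.
  move=> u' /ball_nd [j hj ->]; exists (nd b j); first by apply/ball_nd; exists j.
  by rewrite offj.
split.
  move=> u w /ball_nd [j hj ->] /ball_nd [k hk ->]; rewrite !offj //.
  by rewrite !adj_nd //; lia.
move=> u /ball_nd [j hj ->]; rewrite offj //; exact: H.
Qed.

Lemma relaxed_nd (Sigma Gamma : Type) (psi : verifier Sigma Gamma) r
  n n' (b : 'I_n) (b' : 'I_n') s l s' l' :
  has_radius psi r -> 2 < n -> 2 < n' -> r.*2.+1 < n -> r.*2.+1 < n' ->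
  (forall j, j <= r.*2 -> s' (nd b' j) = s (nd b j) /\ l' (nd b' j) = l (nd b j)) ->
  relaxed psi r s l (nd b r) -> relaxed psi r s' l' (nd b' r).
Proof.
move=> hr h2 h2' hn hn' H [[u [/ball_nd [j hj ->] hN]]|hR].
  left; exists (nd b' j); split; first by apply/ball_nd; exists j.
  by rewrite (proj2 (H j hj)).
right=> L' hL'.
pose L u := if within (cadj n) r (nd b r) u then L' (nd b' (off b u)) else L' (nd b' r).
have offj : forall j, j <= r.*2 -> off b (nd b j) = j.
  by move=> j hj; apply: off_nd; lia.
have HL : forall j, j <= r.*2 -> L (nd b j) = L' (nd b' j).
  move=> j hj; rewrite /L.
  have -> : within (cadj n) r (nd b r) (nd b j) by apply/ball_nd; exists j.
  by rewrite offj.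
have := hR L.
have -> : psi n s L (nd b r) = psi n' s' L' (nd b' r).
  apply: hr => //; apply: iso_nd => // j hj; split; first exact: (proj1 (H j hj)).
  by rewrite HL.
apply=> u /ball_nd [j hj ->].
rewrite HL // -(proj2 (H j hj)); apply: hL'; apply/ball_nd; by exists j.
Qed.

Lemma nd_cong n (b : 'I_n) i d j :
  (val (nd b i) + d == nd b j %[mod n]) = (i + d == j %[mod n]).
Proof. by rewrite /= modnDml modn_mod -addnA eqn_modDl. Qed.

Lemma within_nd n (b : 'I_n) k i j d : d <= k ->
  (i + d = j %[mod n]) \/ (j + d = i %[mod n]) ->
  within (cadj n) k (nd b i) (nd b j).
Proof.
move=> hd H; apply/within_iff; exists d => //.
by case: H => /eqP H; [left|right]; apply/eqP; rewrite nd_cong.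
Qed.

Lemma within_nd_inv n (b : 'I_n) k i j :
  within (cadj n) k (nd b i) (nd b j) ->
  exists2 d, d <= k & (i + d = j %[mod n]) \/ (j + d = i %[mod n]).
Proof.
move/within_iff => [d hd H]; exists d => //.
by case: H => /eqP H; [left|right]; apply/eqP; rewrite -(nd_cong b).
Qed.

Lemma relaxed_ext (Sigma Gamma : Type) (psi : verifier Sigma Gamma) r n s
  (l mu : 'I_n -> option Gamma) u :
  (forall w, within (cadj n) r u w -> mu w = l w) ->
  relaxed psi r s l u -> relaxed psi r s mu u.
Proof.
move=> H [[w [hw hN]]|hR].
  by left; exists w; rewrite H.
right=> L hL; apply: hR => w hw; rewrite -H //; exact: hL.
Qed.
Ltac li := repeat match goal with H : context[?x.*2] |- _ => rewrite -(mul2n x) in H end; rewrite -?mul2n; lia.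

Unset Implicit Arguments.
Theorem corollary8p2 (Sigma Gamma : finType) (psi0 : verifier Sigma Gamma)
  (r0 : nat) (T : nat -> nat) :
  has_radius psi0 r0 ->
  little_o T ->
  mendable_problem psi0 T ->
  exists c : nat, mendable_problem psi0 (fun _ => c).
Proof.
move=> _ ho [psi [r [hr [hfor hmend]]]].
have [N hN] := ho 4 isT.
pose n0 := N + 8 * r + 8.
have h4 : 4 * T n0 <= n0 by apply: hN; rewrite /n0; li.
pose t := T n0.
pose R := t + 2 * r.
have eR : R = t + 2 * r := erefl.
have en0 : n0 = N + 8 * r + 8 := erefl.
have et : t = T n0 := erefl.
exists (R.*2.+2), psi, r; split; first by []; split; first by [].
move=> m hm s l hl v.
case: (leqP m R.*2.+2) => hmc.
  have [mu [h1 [h2 [h3 h4']]]] := hmend m hm s l hl v.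
  exists mu; split => //; split => //; split => // u _.
  apply/within_iff; exists (off v u); first by have := off_lt v u; li.
  by left; apply/nd_eq; rewrite nd_off.
have hn0 : R.*2.+2 <= n0 by li.
have n0pos : 0 < n0 by li.
have hn03 : 2 < n0 by li.
pose b0 : 'I_n0 := Ordinal n0pos.
pose bm : 'I_m := nd v (m - R).
have ev : nd bm R = v.
  rewrite /bm nd_nd; apply: val_inj => /=.
  have -> : v + (m - R + R) = v + m by li.
  by rewrite modnDr modn_small.
pose sT (x : 'I_n0) := if off b0 x <= R.*2 then s (nd bm (off b0 x)) else s v.
pose lT (x : 'I_n0) := if off b0 x <= R.*2 then l (nd bm (off b0 x)) else None.
have offT : forall j, j < n0 -> off b0 (nd b0 j) = j by move=> j hj; apply: off_nd.
have offS : forall j, j < m -> off bm (nd bm j) = j by move=> j hj; apply: off_nd.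
have sTj : forall j, j <= R.*2 -> sT (nd b0 j) = s (nd bm j).
  by move=> j hj; rewrite /sT offT ?hj //; li.
have lTj : forall j, j <= R.*2 -> lT (nd b0 j) = l (nd bm j).
  by move=> j hj; rewrite /lT offT ?hj //; li.
have hA : accepts psi r sT lT.
  move=> x; set i := off b0 x.
  have ex : x = nd b0 i by rewrite nd_off.
  have hi : i < n0 by apply: off_lt.
  case: (leqP i R.*2) => hiR.
    case: (boolP ((r <= i) && (i + r <= R.*2))) => /andP hc.
      case: hc => hc1 hc2.
      have ex' : x = nd (nd b0 (i - r)) r by rewrite nd_nd subnK.
      have H := @relaxed_nd _ _ psi r m n0 (nd bm (i - r)) (nd b0 (i - r)) s l sT lT hr hm hn03.
      rewrite ex'; apply: H; [li|li| |exact: hl].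
      move=> j hj; rewrite (nd_nd b0) (nd_nd bm); split; [rewrite sTj | rewrite lTj] => //; li.
    left.
    case: (ltnP i r) => hir.
      exists (nd b0 (n0.-1)); split.
        rewrite ex; apply: (@within_nd _ _ _ _ _ i.+1) => //; right.
        have -> : n0.-1 + i.+1 = i + n0 by li.
        by rewrite modnDr.
      by rewrite /lT offT; [rewrite ifN //; li | li].
    exists (nd b0 (R.*2.+1)); split.
      rewrite ex; apply: (@within_nd _ _ _ _ _ (R.*2.+1 - i)); first li.
      by left; congr (_ %% _); li.
    by rewrite /lT offT; [rewrite ifN //; li | li].
  left; exists x; split; first by apply/within_iff; exists 0 => //; left; rewrite addn0.
  by rewrite /lT -/i ifN //; li.
have [mu' [h1 [h2 [h3 h4']]]] := hmend n0 hn03 sT lT hA (nd b0 R).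
pose mu (u : 'I_m) := if off bm u <= R.*2 then mu' (nd b0 (off bm u)) else l u.
have core : forall u, mu u <> l u ->
    off bm u <= R.*2 /\ R <= off bm u + t /\ off bm u <= R + t.
  move=> u; rewrite /mu; set i := off bm u.
  have hi : i < m by apply: off_lt.
  case: (leqP i R.*2) => hiR; last by [].
  have lu : l u = lT (nd b0 i) by rewrite lTj // /i nd_off.
  rewrite lu => /h4' /within_nd_inv [d hd [] H].
    have hiR' : i < n0 by li.
    have hR' : R < n0 by li.
    have hd' : d <= n0 by li.
    have := congR hiR' hR' hd' (esym H); li.
  have hiR' : i < n0 by li.
  have hR' : R < n0 by li.
  have hd' : d <= n0 by li.
  have := congR hR' hiR' hd' (esym H); li.
exists mu; split; [|split; [|split]].
- move=> u; set i := off bm u.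
  have ex : u = nd bm i by rewrite nd_off.
  have hi : i < m by apply: off_lt.
  case: (boolP ((r <= i) && (i + r <= R.*2))) => /andP hc.
    case: hc => hc1 hc2.
    have ex' : u = nd (nd bm (i - r)) r by rewrite nd_nd subnK.
    have H := @relaxed_nd _ _ psi r n0 m (nd b0 (i - r)) (nd bm (i - r)) sT mu' s mu hr hn03 hm.
    rewrite ex'; apply: H; [li|li| |exact: h1].
    move=> j hj; rewrite (nd_nd b0) (nd_nd bm); split; first by rewrite sTj //; li.
    by rewrite /mu offS; [rewrite ifT //; li | li].
  apply: (@relaxed_ext _ _ psi r m s l); last exact: hl.
  move=> w hw; case: (eqVneq (mu w) (l w)) => // /eqP/core [c1 [c2 c3]].
  exfalso.
  move: hw; rewrite ex -{1}(nd_off bm w) => /within_nd_inv [d hd [] H].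
    have hw' : off bm w < m by apply: off_lt.
    have hd' : d <= m by li.
    have := congR hw' hi hd' (esym H); li.
  have hw' : off bm w < m by apply: off_lt.
  have hd' : d <= m by li.
  have := congR hi hw' hd' (esym H); li.
- have ov : off bm v = R by rewrite -ev offS; li.
  by rewrite /mu ov ifT //; li.
- move=> u; rewrite /mu; case: ifP => hi // /h3.
  by rewrite lTj // nd_off.
- move=> u /core [c1 [c2 c3]].
  rewrite -ev -(nd_off bm u).
  case: (leqP R (off bm u)) => hRo.
    apply: (@within_nd _ _ _ _ _ (off bm u - R)); first li.
    by left; congr (_ %% _); li.
  apply: (@within_nd _ _ _ _ _ (R - off bm u)); first li.
  by right; congr (_ %% _); li.
Qed.
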